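(* Let $k\ge2$ and $T\ge3$ be integers, and let $a_1,\dots,a_k$ and $b_1,\dots,b_k$ be positive integers with $a_1=b_k=1$ and $a_ib_i\le T$ for all $i$. Set $\Delta=\sum_{i=1}^k a_ib_i$ and $N=\sum_{1\le i\le j\le k}a_ib_j$. Then \[\Delta\le\sqrt{32\,N\,T\ln T}.\] Moreover, this bound is tight up to constant factors. *)

(* Defs.v *)
From HB Require Import structures.
From mathcomp Require Import all_boot all_order all_algebra.
From mathcomp Require Import all_classical all_reals exp.
Set Implicit Arguments. Unset Strict Implicit. Unset Printing Implicit Defensive.
Import Order.TTheory GRing.Theory Num.Theory.

(* Sequences a_1..a_k, b_1..b_k are given as functions nat -> nat; only
   indices 1..k matter. *)

Definition Delta (k : nat) (a b : nat -> nat) : nat :=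
  \sum_(1 <= i < k.+1) a i * b i.

Definition Nsum (k : nat) (a b : nat -> nat) : nat :=
  \sum_(1 <= i < k.+1) \sum_(i <= j < k.+1) a i * b j.

Definition admissible (k T : nat) (a b : nat -> nat) : Prop :=
  2 <= k /\ 3 <= T /\
  (forall i, 1 <= i <= k -> 0 < a i /\ 0 < b i) /\
  a 1 = 1 /\ b k = 1 /\
  (forall i, 1 <= i <= k -> a i * b i <= T).

(* Main.v *)
Require Import Defs.
From HB Require Import structures.
From mathcomp Require Import all_boot all_order all_algebra.
From mathcomp Require Import all_classical all_reals exp.
From mathcomp Require Import zify.
Import Order.TTheory GRing.Theory Num.Theory.
From mathcomp Require Import ring lra.

Lemma amgm (u v : nat) : 2 * (u * v) <= u ^ 2 + v ^ 2.
Proof.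
wlog h : u v / u <= v.
  by move=> H; case: (leqP u v) => h; [exact: H | rewrite (mulnC u) addnC; apply: H; exact: ltnW].
rewrite -(subnKC h); set d := v - u; rewrite sqrnD mulnDr; lia.
Qed.

Lemma cs_nat (L : nat) (x : nat -> nat) :
  (\sum_(c < L) x c) ^ 2 <= L * \sum_(c < L) x c ^ 2.
Proof.
rewrite -(leq_pmul2l (isT : 0 < 2)).
have E : (\sum_(c < L) x c) ^ 2 = \sum_(c < L) \sum_(d < L) x c * x d.
  by rewrite expnS expn1 big_distrl; apply: eq_bigr => c _; rewrite big_distrr.
have E2 : 2 * (L * \sum_(c < L) x c ^ 2) =
          \sum_(c < L) \sum_(d < L) (x c ^ 2 + x d ^ 2).
  transitivity (\sum_(c < L) (L * x c ^ 2 + \sum_(d < L) x d ^ 2)).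
    rewrite big_split /= sum_nat_const card_ord -big_distrr /=; lia.
  by apply: eq_bigr => c _; rewrite big_split /= sum_nat_const card_ord.
rewrite E E2 big_distrr /=; apply: leq_sum => c _.
rewrite big_distrr /=; apply: leq_sum => d _; exact: amgm.
Qed.

Lemma sum_ind (n L : nat) : n < L -> \sum_(c < L) (n == c) = 1.
Proof.
move=> hn; rewrite (bigD1 (Ordinal hn)) //= eqxx big1 // => c hc.
case: eqP => // e; move: hc; rewrite -val_eqE /= -e eqxx //.
Qed.

Lemma sum_from (k i : nat) (g : nat -> nat) : 1 <= i <= k ->
  \sum_(1 <= j < k.+1) (i <= j) * g j = \sum_(i <= j < k.+1) g j.
Proof.
case/andP=> h1 h2; rewrite (big_cat_nat _ (n:=i)) //=; last by lia.
rewrite big_nat_cond big1 ?add0n.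
  by apply: eq_big_nat => j /andP[hj _]; rewrite hj mul1n.
by move=> j /andP[/andP[_ hj] _]; rewrite leqNgt hj.
Qed.

Lemma leq_sum_r (r : seq nat) (F G : nat -> nat) :
  (forall i, i \in r -> F i <= G i) -> \sum_(i <- r) F i <= \sum_(i <- r) G i.
Proof. by move=> h; rewrite !big_seq; apply: leq_sum. Qed.

Lemma core (k T L : nat) (a b f : nat -> nat) :
  (forall i, 1 <= i <= k -> f i < L) ->
  (forall i j, 1 <= i <= k -> 1 <= j <= k -> i <= j -> f i = f j ->
     a i * b i * (a j * b j) <= 2 * T * (a i * b j)) ->
  Delta k a b ^ 2 <= L * (4 * T * Nsum k a b).
Proof.
move=> hf hp.
pose p i := a i * b i.
pose S c := \sum_(1 <= i < k.+1) (f i == c) * p i.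
have EA : Delta k a b = \sum_(c < L) S c.
  rewrite /S exchange_big /=; apply: eq_big_nat => i hi.
  rewrite -big_distrl /= sum_ind ?mul1n //; apply: hf; lia.
have EB : \sum_(c < L) S c ^ 2 =
   \sum_(1 <= i < k.+1) \sum_(1 <= j < k.+1) (f i == f j) * (p i * p j).
  rewrite (eq_bigr (fun c : 'I_L => \sum_(1 <= i < k.+1) \sum_(1 <= j < k.+1)
        ((f i == c) * (f j == c)) * (p i * p j))); last first.
    move=> c _; rewrite expnS expn1 /S big_distrl /=; apply: eq_bigr => i _.
    rewrite big_distrr /=; apply: eq_bigr => j _; lia.
  rewrite exchange_big /=; apply: eq_big_nat => i hi.
  rewrite exchange_big /=; apply: eq_big_nat => j hj.
  rewrite -big_distrl /=; congr (_ * _).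
  case: (eqVneq (f i) (f j)) => e.
    rewrite -e (eq_bigr (fun c : 'I_L => (f i == c) : nat)).
      by rewrite sum_ind //; apply: hf; lia.
    by move=> c _; case: (f i == c).
  rewrite big1 // => c _; case: eqP => // e1; case: eqP => // e2.
  by move: e; rewrite e1 e2 eqxx.
pose X := \sum_(1 <= i < k.+1) \sum_(1 <= j < k.+1)
            ((f i == f j) && (i <= j)) * (p i * p j).
have EC : \sum_(1 <= i < k.+1) \sum_(1 <= j < k.+1) (f i == f j) * (p i * p j)
          <= X + X.
  have EX : X = \sum_(1 <= i < k.+1) \sum_(1 <= j < k.+1)
            ((f j == f i) && (j <= i)) * (p j * p i) by rewrite /X exchange_big.
  rewrite {2}EX /X -big_split /=; apply: leq_sum => i _.
  rewrite -big_split /=; apply: leq_sum => j _.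
  rewrite (eq_sym (f j)) (mulnC (p j)).
  case: (f i == f j) => //=; case: (leqP i j) => h /=; first lia.
  by rewrite (ltnW h); lia.
have ED : X <= 2 * T * Nsum k a b.
  rewrite /Nsum big_distrr /=; apply: leq_sum_r => i hi.
  rewrite -(@sum_from k i); last by move: hi; rewrite mem_index_iota; lia.
  rewrite big_distrr /=; apply: leq_sum_r => j hj.
  move: hi hj; rewrite !mem_index_iota => hi hj.
  case e: (f i == f j) => //=; case h: (i <= j) => //=.
  rewrite !mul1n; apply: hp; try lia; exact/eqP.
rewrite EA; apply: (leq_trans (cs_nat _ _)); rewrite leq_mul2l EB.
apply/orP; right; apply: (leq_trans EC); lia.
Qed.
Lemma geo (n : nat) : \sum_(0 <= j < n) 2 ^ j < 2 ^ n.
Proof.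
elim: n => [|n IH]; first by rewrite big_geq.
rewrite big_nat_recr //= expnS; lia.
Qed.

Definition ea (i : nat) := 2 ^ (i - 1).
Definition eb (k i : nat) := 2 ^ (k - i).

Lemma ex_facts (T : nat) : 3 <= T ->
  let m := trunc_log 2 T in
  admissible m.+1 T ea (eb m.+1) /\ Delta m.+1 ea (eb m.+1) = m.+1 * 2 ^ m /\
  Nsum m.+1 ea (eb m.+1) <= 2 * m.+1 * 2 ^ m /\ T < 2 * 2 ^ m.
Proof.
move=> hT m.
have hm1 : 1 <= m.
  have := @leq_trunc_log 2 2 T ltac:(lia). by rewrite /m; case: (trunc_log 2 T).
have hmT : 2 ^ m <= T by apply: trunc_logP; lia.
have hTm : T < 2 * 2 ^ m by rewrite -expnS; apply: trunc_log_ltn.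
have hp : forall i, 1 <= i <= m.+1 -> ea i * eb m.+1 i = 2 ^ m.
  by move=> i hi; rewrite /ea /eb -expnD; congr (_ ^ _); lia.
split.
  split; first lia. split; first lia.
  split; first by move=> i _; rewrite /ea /eb !expn_gt0.
  split; first by rewrite /ea.
  split; first by rewrite /eb subnn.
  by move=> i hi; rewrite hp.
split.
  rewrite /Delta (eq_big_nat _ _ (F2 := fun _ => 2 ^ m)) ?sum_nat_const_nat; [lia| move=> i hi; apply: hp; lia].
split => //.
rewrite /Nsum.
apply: (@leq_trans (\sum_(1 <= i < m.+2) 2 * 2 ^ m)); last first.
  rewrite sum_nat_const_nat; lia.
apply: leq_sum_r => i; rewrite mem_index_iota => hi.
rewrite big_nat_rev /=.
rewrite (eq_big_nat _ _ (F2 := fun j => 2 ^ (j - 1))); last first.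
  move=> j hj; rewrite /ea /eb -expnD; congr (_ ^ _); lia.
apply: (@leq_trans (\sum_(1 <= j < m.+2) 2 ^ (j - 1))).
  rewrite (big_cat_nat _ (n:=i) (m:=1) (p:=m.+2)) /=; lia.
rewrite -{1}[1]/(0.+1) big_add1 /=.
rewrite (eq_big_nat _ _ (F2 := fun j => 2 ^ j)); last by move=> j _; rewrite subn1.
apply: ltnW; rewrite -expnS; exact: geo.
Qed.

Local Open Scope ring_scope.

Lemma ln2 (R : realType) : 1/2 <= ln (2 : R) <= 1.
Proof.
apply/andP; split.
  have h : ln (1 + (- 2^-1) : R) <= - 2^-1 by apply: le_ln1Dx; lra.
  have e : (1 + (- 2^-1) : R) = 2^-1 by field.
  rewrite e lnV in h; last by rewrite posrE; lra.
  lra.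
have := @le_ln1Dx R 1 ltac:(lra). have -> : (1 + 1 : R) = 2 by lra. by [].
Qed.

Lemma ln_pow2 (R : realType) (n : nat) : ln ((2 ^ n)%:R : R) = n%:R * ln 2.
Proof. by rewrite natrX lnXn ?mulr_natl //; lra. Qed.

Theorem lemma3 (R : realType) :
  (forall (k T : nat) (a b : nat -> nat),
      admissible k T a b ->
      (Delta k a b)%:R <= Num.sqrt (32 * (Nsum k a b)%:R * T%:R * ln (T%:R : R)))
  /\
  (exists c : R, 0 < c /\
     forall T : nat, (3 <= T)%N ->
       exists (k : nat) (a b : nat -> nat),
         admissible k T a b /\
         c * Num.sqrt ((Nsum k a b)%:R * T%:R * ln (T%:R : R)) <= (Delta k a b)%:R).
Proof.
split.
  move=> k T a b [hk [hT [hpos [ha1 [hbk hab]]]]].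
  pose L := (trunc_log 2 T).+1.
  have hc : (Delta k a b ^ 2 <= L * (4 * T * Nsum k a b))%N.
    apply: (@core k T L a b (fun i => trunc_log 2 (a i))).
      move=> i hi; rewrite ltnS; apply: leq_trunc_log.
      have [h1 h2] := hpos i hi; apply: leq_trans (hab i hi); exact: leq_pmulr.
    move=> i j hi hj hij e.
    have [hai hbi] := hpos i hi. have [haj hbj] := hpos j hj.
    have h1 := @trunc_logP 2 (a i) isT hai.
    have h2 := @trunc_log_ltn 2 (a j) isT.
    rewrite -e expnS in h2.
    have h3 : (a j <= 2 * a i)%N by lia.
    have h4 := hab i hi.
    apply: (leq_trans (leq_mul h4 (leqnn (a j * b j)))).
    have h5 : (T * (a j * b j) <= T * (2 * a i * b j))%N.
      by rewrite leq_mul2l leq_mul2r h3 !orbT.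
    by move: h5; rewrite !mulnA (mulnC T 2).
  have hL1 : (2 ^ (L.-1) <= T)%N by apply: trunc_logP; lia.
  have hL2 : (1 <= L.-1)%N.
    have := @leq_trunc_log 2 2 T ltac:(lia). by rewrite /L /=.
  have hlnT : (L.-1)%:R * ln 2 <= ln (T%:R : R).
    rewrite -ln_pow2 ler_ln ?posrE ?ler_nat ?ltr0n ?expn_gt0 //; lia.
  have hL1R : 1 <= (L.-1)%:R :> R by rewrite ler1n.
  have hLR : L%:R = (L.-1)%:R + 1 :> R by rewrite -natr1 /L.
  have [hl2 _] := andP (ln2 R).
  have hlnpos : 0 <= ln (T%:R : R) by nra.
  have hNT : 0 <= (Nsum k a b)%:R * T%:R :> R by rewrite -natrM ler0n.
  rewrite -(ger0_norm (ler0n R (Delta k a b))) -sqrtr_sqr ler_sqrt; last first.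
    rewrite -!mulrA; apply: mulr_ge0 => //; apply: mulr_ge0 => //.
    apply: mulr_ge0 => //; exact: ler0n.
  apply: (le_trans (y := (L * (4 * T * Nsum k a b))%:R)).
    by rewrite -natrX ler_nat.
  rewrite !natrM.
  set x := (Nsum k a b)%:R * T%:R in hNT *.
  have -> : 32 * (Nsum k a b)%:R * T%:R * ln (T%:R : R) = 32 * ln (T%:R) * x.
    by rewrite /x; ring.
  have -> : L%:R * (4 * T%:R * (Nsum k a b)%:R) = 4 * L%:R * x :> R.
    by rewrite /x -[4]/(4%:R) ; ring.
  apply: ler_wpM2r => //; nra.
exists (1/2); split; first lra.
move=> T hT; have [hadm [hD [hN hT2]]] := @ex_facts T hT.
set m := trunc_log 2 T in hadm hD hN hT2.
exists m.+1, ea, (eb m.+1); split => //.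
rewrite hD.
set K := (m.+1)%:R : R. set P := (2 ^ m)%:R : R.
have hK : 0 <= K by rewrite ler0n.
have hP : 0 <= P by rewrite ler0n.
have hNR : (Nsum m.+1 ea (eb m.+1))%:R <= 2 * K * P.
  by rewrite /K /P -[2]/(2%:R) -!natrM ler_nat.
have hTR : (T%:R : R) <= 2 * P.
  by rewrite /P -[2]/(2%:R) -!natrM ler_nat ltnW.
have [_ hl2] := andP (ln2 R).
have hl : ln (T%:R : R) <= K.
  apply: (le_trans (y := ln ((2 ^ m.+1)%:R))).
    rewrite ler_ln ?posrE ?ler_nat ?ltr0n ?expn_gt0 //; [|lia].
    rewrite expnS; exact: ltnW.
  rewrite ln_pow2 /K; nra.
have hl0 : 0 <= ln (T%:R : R) by apply: ln_ge0; rewrite ler1n; lia.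
have key : (Nsum m.+1 ea (eb m.+1))%:R * T%:R * ln (T%:R : R) <= (2 * (K * P)) ^+ 2.
  apply: (le_trans (y := (2 * K * P) * (2 * P) * K)); last by rewrite expr2; nra.
  apply: ler_pM => //; first by apply: mulr_ge0; rewrite ler0n.
  by apply: ler_pM => //; rewrite ler0n.
have : Num.sqrt ((Nsum m.+1 ea (eb m.+1))%:R * T%:R * ln (T%:R : R)) <= 2 * (K * P).
  rewrite -[X in _ <= X](@ger0_norm _ (2 * (K * P))) ?mulr_ge0 //.
  rewrite -sqrtr_sqr ler_sqrt //; exact: sqr_ge0.
rewrite natrM -/K -/P; lra.
Qed.
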